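(* Let $H=\{\lambda\in B_{1/\sqrt2}(0):\ \mathrm{Re}(\lambda)>0,\ \mathrm{Im}(\lambda)>0\}\setminus B_{2/3}(1/3)$. For every $\lambda\in H$ there exist real numbers $a\ge1$ and $b\ge 1/2$ such that $$R_{a,b}\subset \lambda R_{a,b}\cup(\lambda R_{a,b}-1)\cup(\lambda R_{a,b}+1).$$
   Context: $B_r(z_0)$ is the open disc of radius $r$ centered at $z_0$. For $a,b>0$, $R_{a,b}\subset\mathbb C$ is the closed rectangle centered at the origin with vertices $\pm a\pm ib$. For a set $E$, $\lambda E+c=\{\lambda z+c: z\in E\}$. *)

(* Defs.v *)
From Stdlib Require Import Reals.
From Coquelicot Require Import Coquelicot.
Open Scope R_scope.

Definition disc (z0 : C) (r : R) (z : C) : Prop := Cmod (z - z0)%C < r.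

Definition rect (a b : R) (z : C) : Prop :=
  Rabs (Re z) <= a /\ Rabs (Im z) <= b.

Definition affine_image (lam c : C) (E : C -> Prop) (z : C) : Prop :=
  exists w : C, E w /\ z = (lam * w + c)%C.

Definition Hset (lam : C) : Prop :=
  disc 0%C (1 / sqrt 2) lam /\ 0 < Re lam /\ 0 < Im lam /\
  ~ disc (RtoC (1/3)) (2/3) lam.

(* Main.v *)
Require Import Defs.
From Stdlib Require Import Reals Lra Psatz.
From Coquelicot Require Import Coquelicot.
Open Scope R_scope.

Lemma abs_le_iff (t a : R) : -a <= t <= a -> Rabs t <= a.
Proof. intros [H1 H2]. unfold Rabs; destruct Rcase_abs; lra. Qed.

Lemma abs_le_inv (t a : R) : Rabs t <= a -> -a <= t <= a.
Proof. unfold Rabs; destruct Rcase_abs; lra. Qed.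

Lemma key (x y a b u v c : R) :
  0 < x -> 0 < y -> a * y = b * (1 + x) -> 0 <= b ->
  Rabs v <= b ->
  -(b * (x*x+y*y)) <= v*x - (u-c)*y <= b * (x*x+y*y) ->
  affine_image (x,y) (c,0) (rect a b) (u,v).
Proof.
  intros Hx Hy Ha Hb Hv Hw.
  apply abs_le_inv in Hv.
  set (s := x*x+y*y) in *.
  assert (Hs : 0 < s) by (unfold s; nra).
  set (w := u - c) in *.
  exists ((w*x+v*y)/s, (v*x-w*y)/s). split.
  - unfold rect; simpl. split; apply abs_le_iff.
    + assert (E : y*(w*x+v*y) = x*(w*y - v*x) + v*s) by (unfold s; ring).
      assert (-(a*s) <= w*x+v*y <= a*s).
      { split; apply (Rmult_le_reg_l y); try lra; rewrite E;
        replace (y*(a*s)) with (b*(1+x)*s) by (rewrite <- Ha; ring);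
        replace (y*-(a*s)) with (-(b*(1+x)*s)) by (rewrite <- Ha; ring); nra. }
      split.
      * apply (Rmult_le_reg_r s); auto. unfold Rdiv. rewrite Rmult_assoc, Rinv_l by lra. lra.
      * apply (Rmult_le_reg_r s); auto. unfold Rdiv. rewrite Rmult_assoc, Rinv_l by lra. lra.
    + split.
      * apply (Rmult_le_reg_r s); auto. unfold Rdiv. rewrite Rmult_assoc, Rinv_l by lra. lra.
      * apply (Rmult_le_reg_r s); auto. unfold Rdiv. rewrite Rmult_assoc, Rinv_l by lra. lra.
  - unfold Cplus, Cmult; simpl. unfold w. f_equal; field_simplify; try lra;
    unfold s in *; field; lra.
Qed.

Theorem mainTheorem4 :
  forall lam : C, Hset lam ->
  exists a b : R, 1 <= a /\ 1/2 <= b /\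
    forall z : C, rect a b z ->
      affine_image lam 0%C (rect a b) z \/
      affine_image lam (RtoC (-1)) (rect a b) z \/
      affine_image lam (RtoC 1) (rect a b) z.
Proof.
  intros [x y] [H1 [Hx [Hy H2]]]. simpl in Hx, Hy.
  unfold Defs.disc in H1, H2.
  set (s := x*x+y*y).
  assert (Hs : s < 1/2).
  { match type of H1 with Cmod ?t < _ => replace (Cmod t) with (sqrt s) in H1 by (unfold Cmod, s; simpl; apply f_equal; ring) end.
    assert (Hq : 0 < sqrt 2) by (apply sqrt_lt_R0; lra).
    assert (sqrt s * sqrt 2 < 1).
    { apply (Rmult_lt_compat_r (sqrt 2)) in H1; auto.
      replace (1 / sqrt 2 * sqrt 2) with 1 in H1 by (field; lra). exact H1. }
    rewrite <- sqrt_mult in H by (unfold s; nra || lra).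
    assert (0 <= s * 2) by (unfold s; nra).
    apply Rnot_le_lt. intro Hc.
    assert (1 <= sqrt (s*2)).
    { rewrite <- sqrt_1. apply sqrt_le_1_alt. lra. }
    lra. }
  assert (Hc : 3 * s >= 1 + 2 * x).
  { apply Rnot_lt_ge. intro Hc. apply H2.
    unfold Cmod; simpl.
    rewrite <- (sqrt_pow2 (2/3)) by lra.
    apply sqrt_lt_1_alt. split.
    - pose proof (pow2_ge_0 (x - 1/3)); pose proof (pow2_ge_0 y). simpl in *. lra.
    - unfold s in Hc. simpl. ring_simplify. nra. }
  set (d := 1 + 2*x - s).
  assert (Hd : 0 < d) by (unfold d; lra).
  assert (Hx4 : x < 1/4) by lra.
  assert (Hd1 : d <= 1) by (unfold d; lra).
  assert (Hy2 : 1/2 <= y).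
  { assert (1/4 <= y*y) by (unfold s in *; nra). nra. }
  exists ((1+x)/d), (y/d).
  assert (Ha : (1+x)/d * y = y/d * (1+x)) by (field; lra).
  assert (Hb1 : 1/2 <= y/d).
  { apply (Rmult_le_reg_r d); auto. replace (y/d*d) with y by (field; lra). nra. }
  split; [|split; [exact Hb1|]].
  { apply (Rmult_le_reg_r d); auto. replace ((1+x)/d*d) with (1+x) by (field; lra).
    unfold d, s in *. nra. }
  set (a := (1+x)/d) in *. set (b := y/d) in *.
  assert (Hbd : b * d = y) by (unfold b; field; lra).
  assert (Hbs : y <= 2 * b * s).
  { assert (d <= 2*s) by (unfold d; lra). nra. }
  intros [u v] [Hu Hv]. simpl in Hu, Hv.
  apply abs_le_inv in Hu.
  pose proof (abs_le_inv _ _ Hv) as Hv'.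
  assert (Hb0 : 0 <= b) by lra.
  destruct (Rle_dec (u*y - v*x) (b*s)) as [Hl|Hl];
  destruct (Rle_dec (-(b*s)) (u*y - v*x)) as [Hr|Hr].
  - left. apply key; auto. fold s. lra.
  - right; left. apply key; auto. fold s.
    assert (a*y = b*(1+x)) by exact Ha.
    assert (b*d = b*(1+2*x-s)) by reflexivity.
    assert (v*x <= b*x) by nra. assert (-(u*y) <= a*y) by nra.
    split; lra.
  - right; right. apply key; auto. fold s.
    assert (a*y = b*(1+x)) by exact Ha.
    assert (b*d = b*(1+2*x-s)) by reflexivity.
    assert (-(b*x) <= v*x) by nra. assert (u*y <= a*y) by nra.
    split; lra.
  - exfalso. nra.
Qed.
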